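(* Let $P$ be a nilpotent linear operator on a finite-dimensional real or complex symplectic vector space $(V, B)$ which is self-adjoint with respect to $B$. Then every subspace $W \subset V$ invariant under the group $\mathrm{Aut}(V, B, P)$ has the form $W = \bigoplus_{i=1}^s (\operatorname{Ker} P^{k_i} \cap \operatorname{Im} P^{l_i})$ for some $s \in \mathbb{N}$ and integers $k_i, l_i \geq 0$.
   Context: $P$ self-adjoint with respect to $B$ means $B(Pu, v) = B(u, Pv)$ for all $u, v$. $\mathrm{Aut}(V, B, P)$ is the group of linear automorphisms of $V$ preserving $B$ and commuting with $P$ (equivalently, preserving both $B$ and $A(u,v) = B(Pu,v)$). *)

(* Defs.v *)
(* Vectors of V = F^n are row vectors 'rV[F]_n; linear
   operators and bilinear forms are n x n matrices acting on row vectors. *)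
From HB Require Import structures.
From mathcomp Require Import all_boot all_order all_algebra.
From mathcomp Require Import reals.
From mathcomp Require Export complex.
Set Implicit Arguments. Unset Strict Implicit. Unset Printing Implicit Defensive.
Import Order.TTheory GRing.Theory Num.Theory.
Local Open Scope ring_scope.

Section Defs.
Variables (F : fieldType) (n : nat).

Definition bform (M : 'M[F]_n) (u v : 'rV[F]_n) : F := (u *m M *m v^T) 0 0.

Definition app (A : 'M[F]_n) (u : 'rV[F]_n) : 'rV[F]_n := u *m A.

Definition symplectic (M : 'M[F]_n) : Prop :=
  (forall u, bform M u u = 0) /\ M \in unitmx.

Definition self_adjoint (M P : 'M[F]_n) : Prop :=
  forall u v, bform M (app P u) v = bform M u (app P v).

Definition nilpotent (P : 'M[F]_n) : Prop := exists k : nat, P ^+ k = 0.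

Definition in_Aut (M P g : 'M[F]_n) : Prop :=
  [/\ g \in unitmx,
      (forall u v, bform M (app g u) (app g v) = bform M u v) &
      (forall u, app g (app P u) = app P (app g u))].

Definition Aut_invariant (M P W : 'M[F]_n) : Prop :=
  forall g, in_Aut M P g -> forall u : 'rV[F]_n, (u <= W)%MS -> (app g u <= W)%MS.

(* Ker P^k and Im P^l as subspaces (row spaces) of V. *)
Definition KerPow (P : 'M[F]_n) (k : nat) : 'M[F]_n := kermx (P ^+ k).
Definition ImPow (P : 'M[F]_n) (l : nat) : 'M[F]_n := P ^+ l.

Definition theorem7_over : Prop :=
  forall (M P W : 'M[F]_n),
    symplectic M -> nilpotent P -> self_adjoint M P ->
    Aut_invariant M P W ->
    exists (s : nat) (k l : 'I_s -> nat),
      (W == \sum_(i < s) (KerPow P (k i) :&: ImPow P (l i)))%MS.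

End Defs.

(* Main.v *)
Require Import Defs.
From mathcomp Require Import all_boot all_order all_algebra reals complex.
From mathcomp Require Import zify.
From Stdlib Require Import Classical.
Set Implicit Arguments. Unset Strict Implicit. Unset Printing Implicit Defensive.
Import GRing.Theory Num.Theory.
Local Open Scope ring_scope.

Lemma form_eq0 (F : fieldType) n (A : 'M[F]_n) :
  (forall u v : 'rV_n, (u *m A *m v^T) 0 0 = 0) -> A = 0.
Proof.
move=> h; apply/matrixP => i j; have := h (delta_mx 0 i) (delta_mx 0 j).
by rewrite -rowE trmx_delta -colE !mxE.
Qed.

Lemma subsub (F : fieldType) m1 m2 n (A B : 'M[F]_(m1, n)) (W : 'M_(m2, n)) :
  (A <= W)%MS -> (B <= W)%MS -> (A - B <= W)%MS.
Proof. by move=> ha hb; rewrite addmx_sub // -scaleN1r scalemx_sub. Qed.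

Lemma gen4 (V : zmodType) (a b c d : V) : a + b + (c + d) - a - d = b + c.
Proof. by rewrite [X in X - d]addrAC (addrC a b) addrK addrA addrK. Qed.

Section Main.
Variables (F : fieldType) (n : nat) (M P : 'M[F]_n).
Hypothesis two : (2%:R : F) != 0.
Hypothesis alt : forall u, bform M u u = 0.
Hypothesis Munit : M \in unitmx.
Hypothesis adj : self_adjoint M P.

Local Notation B := (bform M).
Implicit Types u v w x y z : 'rV[F]_n.

Lemma bformDl u v w : B (u + v) w = B u w + B v w.
Proof. by rewrite /bform !mulmxDl mxE. Qed.
Lemma bformDr u v w : B u (v + w) = B u v + B u w.
Proof. by rewrite /bform linearD /= mulmxDr mxE. Qed.
Lemma bformZl a u v : B (a *: u) v = a * B u v.
Proof. by rewrite /bform -!scalemxAl mxE. Qed.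
Lemma bformZr a u v : B u (a *: v) = a * B u v.
Proof. by rewrite /bform linearZ /= -scalemxAr mxE. Qed.
Lemma bform0l v : B 0 v = 0.
Proof. by rewrite /bform !mul0mx mxE. Qed.
Lemma bform0r u : B u 0 = 0.
Proof. by rewrite /bform trmx0 mulmx0 mxE. Qed.
Lemma bform_sumr I r (Pr : pred I) u (G : I -> 'rV_n) :
  B u (\sum_(i <- r | Pr i) G i) = \sum_(i <- r | Pr i) B u (G i).
Proof. exact: (big_morph _ (bformDr u) (bform0r u)). Qed.
Lemma bform_suml I r (Pr : pred I) v (G : I -> 'rV_n) :
  B (\sum_(i <- r | Pr i) G i) v = \sum_(i <- r | Pr i) B (G i) v.
Proof. exact: (big_morph (fun u => B u v) (fun x y => bformDl x y v) (bform0l v)). Qed.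

Lemma skew u v : B u v = - B v u.
Proof.
have := alt (u + v); rewrite !bformDl !bformDr (alt u) (alt v) add0r addr0.
by move/eqP; rewrite addr_eq0 => /eqP.
Qed.

Lemma mulmxX x a b : x *m P ^+ (a + b) = x *m P ^+ a *m P ^+ b.
Proof. by rewrite exprD -mulmxE mulmxA. Qed.

Lemma adjk k u v : B (u *m P ^+ k) v = B u (v *m P ^+ k).
Proof.
elim: k u v => [|k IH] u v; first by rewrite expr0 !mulmx1.
rewrite {1}exprS -mulmxE mulmxA IH.
have := adj (u) (v *m P ^+ k); rewrite /app => ->.
by rewrite -mulmxA mulmxE -exprSr.
Qed.

Lemma selfz z a b : B (z *m P ^+ a) (z *m P ^+ b) = 0.
Proof.
rewrite -adjk -mulmxA mulmxE -exprD.
set s := B _ z.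
have h : s = - s by rewrite {1}/s adjk skew.
have : 2%:R * s = 0 by rewrite mulr_natl mulr2n {1}h addNr.
by move/eqP; rewrite mulf_eq0 (negbTE two) => /eqP.
Qed.

Lemma adjM : P *m M = M *m P^T.
Proof.
apply/eqP; rewrite -subr_eq0; apply/eqP/form_eq0 => u v.
rewrite mulmxBr mulmxBl mxE.
have := adj u v; rewrite /bform /app trmx_mul !mulmxA => ->.
by rewrite [X in _ + X]mxE subrr.
Qed.

Lemma adjkM k : P ^+ k *m M = M *m (P ^+ k)^T.
Proof.
elim: k => [|k IH]; first by rewrite expr0 mul1mx (_ : (1 : 'M[F]_n)^T = 1) ?mulmx1 //; apply: trmx1.
rewrite exprSr -mulmxE -mulmxA adjM mulmxA IH -mulmxA -trmx_mul.
by rewrite mulmxE -exprS exprSr.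
Qed.

Lemma uPi0 u H i : u *m P ^+ H.+1 = 0 -> (H < i)%N -> u *m P ^+ i = 0.
Proof. by move=> hu hi; rewrite -(subnKC hi) mulmxX hu mul0mx. Qed.

Definition Xop m z : 'M[F]_n :=
  \sum_(i < m.+1) P ^+ i *m M *m z^T *m (z *m P ^+ (m - i)).

Lemma Xop_vec m z x :
  x *m Xop m z = \sum_(i < m.+1) B (x *m P ^+ i) z *: (z *m P ^+ (m - i)).
Proof.
rewrite /Xop mulmx_sumr; apply: eq_bigr => i _.
by rewrite /bform -mul_scalar_mx -mx11_scalar !mulmxA.
Qed.

Lemma Xop_comm m z : z *m P ^+ m.+1 = 0 ->
  forall x, x *m P *m Xop m z = x *m Xop m z *m P.
Proof.
move=> hz x; rewrite !Xop_vec mulmx_suml big_ord_recr big_ord_recl /=.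
rewrite subnn subn0 -mulmxA mulmxE -exprS adjk hz bform0r scale0r addr0.
rewrite -scalemxAl -mulmxA mulmxE -exprSr hz scaler0 add0r.
apply: eq_bigr => i _; rewrite /bump /= add1n.
by rewrite -scalemxAl -!mulmxA !mulmxE -exprS -exprSr subnSK.
Qed.

Lemma Xop_form m z x y :
  B (x *m (1%:M + Xop m z)) (y *m (1%:M + Xop m z)) = B x y.
Proof.
rewrite !mulmxDr !mulmx1 !bformDl !bformDr.
have h1 : B (x *m Xop m z) (y *m Xop m z) = 0.
  rewrite !Xop_vec bform_suml big1 // => i _.
  rewrite bformZl bform_sumr big1 ?mulr0 // => j _.
  by rewrite bformZr selfz mulr0.
have h2 : B x (y *m Xop m z) + B (x *m Xop m z) y = 0.
  rewrite !Xop_vec bform_sumr bform_suml.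
  under eq_bigr do rewrite bformZr -adjk.
  under [X in _ + X]eq_bigr do rewrite bformZl (adjk _ z) (skew z) mulrN.
  rewrite sumrN (reindex_inj rev_ord_inj) /=.
  apply/eqP; rewrite subr_eq0; apply/eqP; apply: eq_bigr => i _.
  by rewrite subSS subKn ?leq_ord // mulrC.
by rewrite h1 addr0 -addrA h2 addr0.
Qed.

Lemma Xop_Aut m z : z *m P ^+ m.+1 = 0 -> in_Aut M P (1%:M + Xop m z).
Proof.
move=> hz; split.
- have E : (1%:M + Xop m z) *m M *m (1%:M + Xop m z)^T = M.
    apply/eqP; rewrite -subr_eq0; apply/eqP/form_eq0 => u v.
    rewrite mulmxBr mulmxBl mxE.
    have := Xop_form m z u v; rewrite /bform trmx_mul !mulmxA => ->.
    by rewrite [X in _ + X]mxE subrr.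
  have : (1%:M + Xop m z) *m (M *m (1%:M + Xop m z)^T) \in unitmx.
    by rewrite mulmxA E.
  by rewrite unitmx_mul => /andP[].
- by move=> u v; rewrite /app Xop_form.
- move=> u; rewrite /app !mulmxDr !mulmx1 mulmxDl.
  by rewrite Xop_comm.
Qed.

Lemma X_sub (W : 'M[F]_n) m z u : Aut_invariant M P W -> z *m P ^+ m.+1 = 0 ->
  (u <= W)%MS -> (u *m Xop m z <= W)%MS.
Proof.
move=> HW hz hu; have := HW _ (Xop_Aut hz) u hu.
rewrite /app mulmxDr mulmx1 => h.
have -> : u *m Xop m z = (u + u *m Xop m z) - u by rewrite [u + _]addrC addrK.
exact: subsub.
Qed.

Lemma dual k z : (forall w, w *m P ^+ k = 0 -> B z w = 0) -> (z <= P ^+ k)%MS.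
Proof.
move=> hz; set K := kermx (P ^+ k).
have zK : z *m (M *m K^T) = 0.
  apply/rowP => i; rewrite [RHS]mxE.
  have hr : row i K *m P ^+ k = 0 by rewrite -row_mul mulmx_ker row0.
  have := hz _ hr.
  rewrite /bform tr_row colE mulmxA -colE mxE => <-.
  by rewrite !mulmxA.
have sPD : (P ^+ k <= kermx (M *m K^T))%MS.
  apply/sub_kermxP.
  by rewrite mulmxA adjkM -mulmxA -trmx_mul mulmx_ker trmx0 mulmx0.
have Mfull : row_full M by rewrite row_full_unit.
have rk : \rank (kermx (M *m K^T)) = \rank (P ^+ k).
  rewrite mxrank_ker (eqmxMfull _ Mfull) mxrank_tr mxrank_ker subKn //.
  exact: rank_leq_row.
have : (P ^+ k == kermx (M *m K^T))%MS.
  by rewrite -(mxrank_leqif_eq sPD).2 rk eqxx.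
case/andP => _ sDP; apply: submx_trans sDP.
exact/sub_kermxP.
Qed.

Lemma scale_sub_inv (c : F) (v : 'rV[F]_n) (W : 'M[F]_n) :
  c != 0 -> (c *: v <= W)%MS -> (v <= W)%MS.
Proof.
by move=> cn h; rewrite -(scale1r v) -(mulVf cn) -scalerA scalemx_sub.
Qed.

Lemma lemA (W : 'M[F]_n) u w H l :
  Aut_invariant M P W -> (u <= W)%MS -> u *m P ^+ H.+1 = 0 ->
  w *m P ^+ (H.+1 + l) = 0 -> B (u *m P ^+ H) w != 0 ->
  (kermx (P ^+ H.+1) :&: P ^+ l <= W)%MS.
Proof.
move=> HW uW uH wH cH.
have c0 i : (H < i)%N -> B (u *m P ^+ i) w = 0.
  by move=> hi; rewrite (uPi0 uH hi) bform0l.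
have step1 : forall d k, (H < k + d)%N -> (w *m P ^+ (l + k) <= W)%MS.
  elim=> [|d IH] k hk.
    rewrite addn0 in hk.
    rewrite (_ : (l + k = (H.+1 + l) + (k - H.+1))%N); last by lia.
    by rewrite mulmxX wH mul0mx sub0mx.
  have hz : w *m P ^+ (H + l + k).+1 = 0.
    rewrite (_ : ((H + l + k).+1 = (H.+1 + l) + k)%N); last by lia.
    by rewrite mulmxX wH mul0mx.
  have hX := X_sub HW hz uW.
  have hHm : (H < (H + l + k).+1)%N by lia.
  rewrite Xop_vec (bigD1 (Ordinal hHm)) //= in hX.
  set rest := (X in _ + X) in hX.
  have hrest : (rest <= W)%MS.
    apply: summx_sub => i hi.
    case: (ltngtP H i) => [Hi|iH|eq].
    - by rewrite c0 // scale0r sub0mx.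
    - apply: scalemx_sub.
      rewrite (_ : (H + l + k - i = l + (k + (H - i)))%N); last by lia.
      apply: IH; lia.
    - by move/eqP: hi; case; apply/val_inj => /=; apply: esym.
  have := subsub hX hrest; rewrite addrK.
  rewrite (_ : (H + l + k - H = l + k)%N); last by lia.
  exact: scale_sub_inv.
have step1' k : (w *m P ^+ (l + k) <= W)%MS.
  by apply: (step1 H.+1); lia.
have step2 : forall y, y *m P ^+ (H.+1 + l) = 0 ->
    ((\sum_(i < (H + l).+1) B (u *m P ^+ i) w *: (y *m P ^+ (H + l - i)))%R <= W)%MS.
  move=> y yH.
  have hm z : z *m P ^+ (H.+1 + l) = 0 -> z *m P ^+ (H + l).+1 = 0.
    by rewrite addSn.
  have hwy : (w + y) *m P ^+ (H.+1 + l) = 0 by rewrite mulmxDl wH yH addr0.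
  have h1 := X_sub HW (hm _ hwy) uW.
  have h2 := X_sub HW (hm _ wH) uW.
  have h3 := X_sub HW (hm _ yH) uW.
  have h := subsub (subsub h1 h2) h3.
  rewrite !Xop_vec -!sumrB in h.
  have e : forall i : 'I_(H + l).+1, true ->
     B (u *m P ^+ i) (w + y) *: ((w + y) *m P ^+ (H + l - i))
     - B (u *m P ^+ i) w *: (w *m P ^+ (H + l - i))
     - B (u *m P ^+ i) y *: (y *m P ^+ (H + l - i)) =
     B (u *m P ^+ i) w *: (y *m P ^+ (H + l - i)) +
     B (u *m P ^+ i) y *: (w *m P ^+ (H + l - i)).
    move=> i _; rewrite bformDr mulmxDl scalerDl !scalerDr.
    by rewrite gen4.
  rewrite (eq_bigr _ e) in h.
  rewrite big_split /= in h.
  have hw : ((\sum_(i < (H + l).+1) B (u *m P ^+ i) y *: (w *m P ^+ (H + l - i)))%R <= W)%MS.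
    apply: summx_sub => i _; case: (leqP i H) => iH.
    - apply: scalemx_sub.
      rewrite (_ : (H + l - i = l + (H - i))%N); last by lia.
      exact: step1'.
    - by rewrite (uPi0 uH iH) bform0l scale0r sub0mx.
  by have := subsub h hw; rewrite addrK.
have step3 : forall d y, y *m P ^+ d = 0 -> y *m P ^+ (H.+1 + l) = 0 ->
    (y *m P ^+ l <= W)%MS.
  elim=> [|d IH] y yd yH.
    rewrite expr0 mulmx1 in yd.
    by rewrite yd mul0mx sub0mx.
  have hs := step2 y yH.
  have hHm : (H < (H + l).+1)%N by lia.
  rewrite (bigD1 (Ordinal hHm)) //= in hs.
  set rest := (X in _ + X) in hs.
  have hrest : (rest <= W)%MS.
    apply: summx_sub => i hi.
    case: (ltngtP H i) => [Hi|iH|eq].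
    - by rewrite c0 // scale0r sub0mx.
    - apply: scalemx_sub.
      rewrite (_ : (H + l - i = (H - i) + l)%N); last by lia.
      rewrite mulmxX; apply: IH.
        rewrite -mulmxX (_ : (H - i + d = d.+1 + (H - i).-1)%N); last by lia.
        by rewrite mulmxX yd mul0mx.
      rewrite -mulmxX (_ : (H - i + (H.+1 + l) = (H.+1 + l) + (H - i))%N); last by lia.
      by rewrite mulmxX yH mul0mx.
    - by move/eqP: hi; case; apply/val_inj => /=; apply: esym.
  have := subsub hs hrest; rewrite addrK.
  rewrite (_ : (H + l - H = l)%N); last by lia.
  exact: scale_sub_inv.
apply/row_subP => r.
have := row_sub r (kermx (P ^+ H.+1) :&: P ^+ l)%MS.
rewrite sub_capmx => /andP [/sub_kermxP vK /submxP [D eD]].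
rewrite eD in vK *.
have hD0 : D *m P ^+ (H.+1 + l) = 0 by rewrite addnC mulmxX vK.
exact: (step3 _ _ hD0 hD0).
Qed.

Lemma main_thm (W : 'M[F]_n) k0 : P ^+ k0 = 0 -> Aut_invariant M P W ->
  exists (s : nat) (k l : 'I_s -> nat),
    (W == \sum_(i < s) (KerPow P (k i) :&: ImPow P (l i)))%MS.
Proof.
move=> Pk0 HW.
pose N := k0.+1.
pose kf (i : nat) := if (kermx (P ^+ (i %/ N)) :&: P ^+ (i %% N) <= W)%MS
                     then (i %/ N)%N else 0%N.
exists (N * N)%N, (fun i => kf i), (fun i => (i %% N)%N).
set S := (\sum_(i < N * N) _)%MS.
have SW : (S <= W)%MS.
  apply/sumsmx_subP => i _; rewrite /KerPow /ImPow /kf.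
  case: ifP => // _.
  apply: submx_trans (capmxSl _ _) _.
  have : kermx (P ^+ 0) == 0.
    by rewrite -mxrank_eq0 mxrank_ker expr0 (mxrank_unit (unitmx1 _ _)) subnn.
  by move/eqP ->; rewrite sub0mx.
have key : forall h u, (u <= W)%MS -> u *m P ^+ h = 0 -> (u <= S)%MS.
  elim=> [|h IH] u uW uh.
    by rewrite expr0 mulmx1 in uh; rewrite uh sub0mx.
  case: (eqVneq (u *m P ^+ h) 0) => [uh0|zn0]; first exact: IH.
  set z := u *m P ^+ h in zn0.
  have hk0 : (h < k0)%N.
    rewrite ltnNge; apply/negP => le; move: zn0.
    by rewrite /z -(subnKC le) exprD Pk0 mul0r mulmx0 eqxx.
  pose pl := fun j => (z <= P ^+ (h + j))%MS.
  have ex : exists j, pl j by exists 0%N; rewrite /pl addn0 submxMl.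
  have ub : forall j, pl j -> (j <= k0)%N.
    move=> j; rewrite /pl; case: (leqP k0 (h + j)) => hj; last by lia.
    rewrite -(subnKC hj) exprD Pk0 mul0r submx0 (negbTE zn0) //.
  case: (ex_maxnP ex ub) => l pll lmax.
  have nl1 : ~~ pl l.+1 by apply/negP => hl; have := lmax _ hl; rewrite ltnn.
  have [w [wP Bw]] : exists w : 'rV_n, w *m P ^+ (h.+1 + l) = 0 /\ B z w != 0.
    apply: NNPP => hne; apply: (negP nl1); apply: dual => w wP.
    apply/eqP/negP => ne; apply: hne; exists w; split; last exact/negP.
    by rewrite addSnnS.
  have capW := lemA HW uW uh wP Bw.
  have hlk : (l < k0)%N.
    have : ~~ (P ^+ (h + l) == 0).
      apply/negP => /eqP e; move: pll; rewrite /pl e submx0 (negbTE zn0) //.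
    case: (leqP k0 (h + l)) => hj; last by lia.
    by rewrite -(subnKC hj) exprD Pk0 mul0r eqxx.
  case/submxP: pll => y0 zy.
  set a := y0 *m P ^+ l.
  have aK : (a <= kermx (P ^+ h.+1) :&: P ^+ l)%MS.
    rewrite sub_capmx submxMl andbT; apply/sub_kermxP.
    rewrite /a -mulmxX (_ : (l + h.+1 = (h + l) + 1)%N); last by lia.
    by rewrite mulmxX -zy /z -mulmxX addn1 uh.
  have aS : (a <= S)%MS.
    apply: submx_trans aK _.
    have hi : (h.+1 * N + l < N * N)%N by rewrite /N; nia.
    apply: (sumsmx_sup (Ordinal hi)) => //=.
    have ed : ((h.+1 * N + l) %/ N = h.+1)%N.
      by rewrite divnMDl // divn_small ?addn0 // /N; lia.
    have em : ((h.+1 * N + l) %% N = l)%N.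
      by rewrite modnMDl modn_small // /N; lia.
    by rewrite /kf /KerPow /ImPow ed em capW.
  have bW : (u - a <= W)%MS := subsub uW (submx_trans aK capW).
  have bh : (u - a) *m P ^+ h = 0.
    by rewrite mulmxBl -/z zy /a -mulmxX addnC subrr.
  rewrite -(subrK a u); exact: addmx_sub (IH _ bW bh) aS.
apply/andP; split; last exact: SW.
apply/row_subP => r; apply: (key k0); first exact: row_sub.
by rewrite Pk0 mulmx0.
Qed.

End Main.

Lemma gen (F : numFieldType) n : theorem7_over F n.
Proof.
move=> M P W [alt Mu] [k0 Pk0] adj HW.
have two : (2%:R : F) != 0 by rewrite pnatr_eq0.
exact: (main_thm two alt Mu adj Pk0 HW).
Qed.

Theorem theorem7 :
  forall (R : realType) (n : nat),
    theorem7_over R n /\ theorem7_over R[i] n.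
Proof. by move=> R n; split; apply: gen. Qed.
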